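(* The abelian groups in $\mathcal{D}_1$ are exactly the cyclic groups of order $p^2$ with $p$ prime. The nonabelian groups in $\mathcal{D}_1$ are exactly the Frobenius groups of order $pq$ with $p,q$ primes.
   Context: All groups are finite. $\mathcal{D}(G)$ denotes the number of conjugacy classes of nontrivial subgroups $H$ of $G$ with $N_G(H)\neq H$; $\mathcal{D}_n$ is the family of finite groups $G$ with $\mathcal{D}(G)=n$. *)

(* Defs.v *)
From mathcomp Require Import all_boot all_fingroup all_solvable.
Set Implicit Arguments. Unset Strict Implicit. Unset Printing Implicit Defensive.
Local Open Scope group_scope.

Definition nonselfnorm_subgroups (gT : finGroupType) (G : {set gT}) : {set {set gT}} :=
  [set H : {set gT} | [&& group_set H, H \subset G, H != 1 & 'N_G(H) != H]].

Definition calD (gT : finGroupType) (G : {set gT}) : nat :=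
  #| [set H :^: G | H in nonselfnorm_subgroups G] |.

(* Main.v *)
Require Import Defs.
From mathcomp Require Import all_boot all_fingroup all_solvable.
From mathcomp Require vcharacter.
From Stdlib Require Import Classical.
Set Implicit Arguments. Unset Strict Implicit. Unset Printing Implicit Defensive.
Local Open Scope group_scope.


Section Aux.
Variable gT : finGroupType.
Implicit Types G H K : {group gT}.

Definition bad G H := [&& H \subset G, H :!=: 1 & 'N_G(H) :!=: H].

Lemma NSE G H : ((H : {set gT}) \in nonselfnorm_subgroups G) = bad G H.
Proof. by rewrite inE groupP. Qed.

Lemma NS_group G (X : {set gT}) : X \in nonselfnorm_subgroups G ->
  exists K : {group gT}, X = K /\ bad G K.
Proof.
move=> XN; have := XN; rewrite inE => /andP[gX _].
exists (Group gX); split=> //; by rewrite -NSE.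
Qed.

Lemma calD1_conj G H K : calD G = 1%N -> bad G H -> bad G K ->
  exists2 g, g \in G & (K : {set gT}) = H :^ g.
Proof.
move=> /eqP/cards1P[C defC] bH bK.
have: H :^: G \in [set H :^: G | H in nonselfnorm_subgroups G].
  by apply: imset_f; rewrite NSE.
have: K :^: G \in [set H :^: G | H in nonselfnorm_subgroups G].
  by apply: imset_f; rewrite NSE.
rewrite defC !inE => /eqP eK /eqP eH.
have: (K : {set gT}) \in K :^: G by apply/imsetP; exists 1; rewrite ?group1 ?conjsg1.
by rewrite eK -eH => /imsetP[g Gg ->]; exists g.
Qed.

Lemma calD1_card G H K : calD G = 1%N -> bad G H -> bad G K -> #|K| = #|H|.
Proof. by move=> D1 bH bK; have [g _ ->] := calD1_conj D1 bH bK; rewrite cardJg. Qed.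

Lemma calD1_ex G : calD G = 1%N -> exists H, bad G H.
Proof.
move=> D1; have: 0 < calD G by rewrite D1.
rewrite card_gt0 => /set0Pn[C /imsetP[X XN _]].
by have [K [_ bK]] := NS_group XN; exists K.
Qed.

Lemma calD1_intro G H : bad G H ->
  (forall K, bad G K -> exists2 g, g \in G & (K : {set gT}) = H :^ g) ->
  calD G = 1%N.
Proof.
move=> bH all; apply/eqP/cards1P; exists (H :^: G).
apply/setP=> C; rewrite inE; apply/imsetP/eqP=> [[X XN ->] | ->].
  have [K [-> bK]] := NS_group XN; have [g Gg ->] := all K bK.
  apply/setP=> Y; apply/imsetP/imsetP=> [[y Gy ->] | [y Gy ->]].
    by exists (g * y); rewrite ?groupM // conjsgM.
  by exists (g^-1 * y); rewrite ?groupM ?groupV // conjsgM conjsgK.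
by exists (H : {set gT}); rewrite // NSE.
Qed.

Lemma bad_pgroup G (A B : {group gT}) (p : nat) : p.-group B -> B \subset G -> A \proper B -> A :!=: 1 ->
  bad G A.
Proof.
move=> pB sBG ltAB ntA; rewrite /bad ntA (subset_trans (proper_sub ltAB) sBG) /=.
have := nilpotent_proper_norm (pgroup_nil pB) ltAB.
apply: contraTneq => eN; rewrite properE negb_and; apply/orP; right.
by rewrite -{2}eN setSI.
Qed.
End Aux.


Section Ab.
Variable gT : finGroupType.
Implicit Types G H K : {group gT}.

Lemma bad_abelian G H : abelian G ->
  bad G H = [&& H \subset G, H :!=: 1 & H :!=: G].
Proof.
move=> abG; rewrite /bad; have [sHG|nsHG] := boolP (H \subset G); last by [].
rewrite /= (setIidPl (sub_abelian_norm abG sHG)).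
by congr (_ && _); apply/idP/idP; apply: contra => /eqP ->.
Qed.

Lemma sub_card_eq G H : H \subset G -> #|H| = #|G| -> H :=: G.
Proof. by move=> sHG eHG; apply/eqP; rewrite eqEcard sHG eHG leqnn. Qed.

Lemma abelian_fwd G : abelian G -> calD G = 1%N ->
  cyclic G /\ exists p, prime p /\ #|G| = (p ^ 2)%N.
Proof.
move=> abG D1; have [H0 bH0] := calD1_ex D1.
have uniq K : K \subset G -> K :!=: 1 -> K :!=: G -> K :=: H0.
  move=> sKG ntK neKG; have bK : bad G K by rewrite bad_abelian // sKG ntK.
  have [g Gg ->] := calD1_conj D1 bH0 bK.
  case/and3P: bH0 => sH0G _ _.
  by apply/normP; apply: (subsetP (sub_abelian_norm abG sH0G)).
have := bH0; rewrite bad_abelian // => /and3P[sH0G ntH0 neH0G].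
have ltH0G : H0 \proper G by rewrite properEneq neH0G.
have [_ [x Gx nH0x]] := properP ltH0G.
have x1 : x != 1 by apply: contraNneq nH0x => ->.
have defG : <[x]> :=: G.
  apply/eqP; apply: contraR nH0x => neq.
  have ->: H0 :=: <[x]>.
    symmetry; apply: uniq => //; first by rewrite cycle_subG.
    by rewrite cycle_eq1.
  exact: cycle_id.
have cycG : cyclic G by apply/cyclicP; exists x.
split=> //.
set n := #|G|.
have n_gt1 : 1 < n by rewrite cardG_gt1; apply: contraNneq ntH0 => G1; rewrite -subG1 -G1.
have pr_p := pdiv_prime n_gt1; set p := pdiv n in pr_p.
have p_dvd : p %| n := pdiv_dvd n.
have nep : n != p.
  apply/eqP=> np; have := cardSg sH0G; rewrite -/n np.
  case/(dvdn_pfactor _ 1 pr_p) => -[|[|//]] _; rewrite ?expn0 ?expn1 => cH.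
    by move/eqP: ntH0; apply; apply: card1_trivg.
  by move/eqP: neH0G; apply; apply: sub_card_eq; rewrite // cH.
have [y Gy oy] := Cauchy pr_p p_dvd.
have ey : <[y]> :=: H0.
  apply: uniq; first by rewrite cycle_subG.
    by rewrite -cardG_gt1 -orderE oy prime_gt1.
  by apply/eqP=> eG; move/eqP: nep; apply; rewrite /n -eG -orderE oy.
have ox : #[x] = n by rewrite orderE defG.
have oz : #[x ^+ p] = n %/ p by rewrite orderXdiv ox.
have np_gt1 : 1 < n %/ p.
  rewrite ltn_divRL // mul1n ltn_neqAle (dvdn_leq _ p_dvd) ?andbT 1?eq_sym //.
  by apply: ltnW.
have ez : <[x ^+ p]> :=: H0.
  apply: uniq; first by rewrite cycle_subG groupX.
    by rewrite -cardG_gt1 -orderE oz.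
  apply/eqP=> eG; have := oz; rewrite orderE eG -/n => enp.
  have := ltn_Pdiv (prime_gt1 pr_p) (ltnW n_gt1).
  by rewrite -enp ltnn.
exists p; split=> //.
have: #|<[y]>| = #|<[x ^+ p]>| by rewrite ey ez.
rewrite -!orderE oy oz => epq.
by rewrite -/n -(divnK p_dvd) -epq.
Qed.
Lemma abelian_bwd G : abelian G -> cyclic G -> (exists p, prime p /\ #|G| = (p ^ 2)%N) ->
  calD G = 1%N.
Proof.
move=> abG cycG [p [pr_p cG]].
have p_dvd : p %| #|G| by rewrite cG dvdn_exp.
have [y Gy oy] := Cauchy pr_p p_dvd.
have p_gt1 := prime_gt1 pr_p.
have bY : bad G <[y]>.
  rewrite bad_abelian // cycle_subG Gy -cardG_gt1 -orderE oy p_gt1 /=.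
  apply/eqP=> eG; have := cG; rewrite -eG -orderE oy => /eqP.
  by rewrite -{1}[p]expn1 eqn_exp2l.
apply: (calD1_intro bY) => K; rewrite bad_abelian // => /and3P[sKG ntK neKG].
exists 1; rewrite ?group1 // conjsg1; apply/eqP.
rewrite (eq_subG_cyclic cycG) ?cycle_subG // -orderE oy.
have := cardSg sKG; rewrite cG; case/(dvdn_pfactor _ _ pr_p) => -[|[|[|//]]] _.
- by rewrite expn0 => /card1_trivg eK; rewrite eK eqxx in ntK.
- by rewrite expn1 => ->.
- by move=> cK; rewrite (sub_card_eq sKG) ?eqxx ?cG in neKG.
Qed.
End Ab.


Lemma prime_factor_aux a b p q : prime p -> prime q -> (a * b = p * q)%N -> 1 < b ->
  p %| a -> a = p.
Proof.
move=> pr_p pr_q eab b_gt1 pa.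
have [a' ea] : exists a', a = (a' * p)%N by exists (a %/ p); rewrite divnK.
move: eab; rewrite ea mulnAC [(p * q)%N]mulnC => /eqP.
rewrite eqn_pmul2r ?prime_gt0 // => /eqP eq.
have : a' %| q by rewrite -eq dvdn_mulr.
case/primeP: (pr_q) => _ /[apply] /orP[] /eqP ea'.
  by rewrite ea' mul1n.
move: eq; rewrite ea' -{2}[q]muln1 => /eqP; rewrite eqn_pmul2l ?prime_gt0 // => /eqP b1.
by rewrite b1 in b_gt1.
Qed.

Lemma prime_factor2 a b p q : prime p -> prime q -> (a * b = p * q)%N -> 1 < a -> 1 < b ->
  prime a.
Proof.
move=> pr_p pr_q eab a_gt1 b_gt1.
have pr_r := pdiv_prime a_gt1; set r := pdiv a in pr_r.
have r_dvd : r %| a := pdiv_dvd a.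
have : r %| p * q by rewrite -eab dvdn_mulr.
rewrite Euclid_dvdM // !dvdn_prime2 // => /orP[] /eqP er.
- have := prime_factor_aux pr_p pr_q eab b_gt1.
  by rewrite -er => /(_ r_dvd) ->.
- have := @prime_factor_aux a b q p pr_q pr_p; rewrite [(q * p)%N]mulnC => /(_ eab b_gt1).
  by rewrite -er => /(_ r_dvd) ->.
Qed.

Section NBwd.
Variable gT : finGroupType.
Implicit Types G H K L : {group gT}.

Lemma compl_selfnorm G H : [Frobenius G with complement H] -> 'N_G(H) = H.
Proof. by case/andP=> _ /and3P[_ _ /eqP]; rewrite normD1. Qed.

Lemma normJ_in G H g : g \in G -> 'N_G(H :^ g) = 'N_G(H) :^ g.
Proof. by move=> Gg; rewrite normJ conjIg conjGid. Qed.

Lemma sylow_prime G L r : prime r -> L \subset G -> #|L| = r -> ~~ (r %| #|G : L|) ->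
  r.-Sylow(G) L.
Proof. by move=> pr_r sLG cL nr; rewrite /pHall sLG /pgroup cL pnat_id // p'natE. Qed.

Lemma nonab_bwd G : [Frobenius G] ->
  (exists p q, [/\ prime p, prime q & #|G| = (p * q)%N]) -> calD G = 1%N.
Proof.
case/existsP=> H frobH [p [q [pr_p pr_q cG]]].
have [K frobK] := vcharacter.Frobenius_kernel_exists frobH.
have [defG ntK ntH ltKG ltHG] := Frobenius_context frobK.
have cKH := sdprod_card defG.
have cop := Frobenius_coprime frobK.
have hallK := Hall_pi (Frobenius_ker_Hall frobK).
have [nsKG sHG _ _ _] := sdprod_context defG.
have k_gt1 : 1 < #|K| by rewrite cardG_gt1.
have h_gt1 : 1 < #|H| by rewrite cardG_gt1.
have pr_k : prime #|K|.
  by apply: (prime_factor2 pr_p pr_q _ k_gt1 h_gt1); rewrite cKH.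
have pr_h : prime #|H|.
  by apply: (prime_factor2 pr_p pr_q _ h_gt1 k_gt1); rewrite mulnC cKH.
have NH := compl_selfnorm frobH.
have sKG := proper_sub ltKG.
have bK : bad G K.
  rewrite /bad sKG ntK /= (setIidPl (normal_norm nsKG)).
  by apply: contraTneq ltKG => ->; rewrite properxx.
apply: (calD1_intro bK) => L /and3P[sLG ntL nNL].
exists 1; rewrite ?group1 // conjsg1.
have dL : #|L| %| #|K| * #|H| by rewrite cKH cardSg.
have L_gt1 : 1 < #|L| by rewrite cardG_gt1.
have neLG : #|L| != #|G|.
  apply: contra nNL => /eqP cL; rewrite (sub_card_eq sLG cL).
  by rewrite (setIidPl (normG _)).
have [kL | nkL] := boolP (#|K| %| #|L|).
  have [e eL] : exists e, #|L| = (e * #|K|)%N by exists (#|L| %/ #|K|); rewrite divnK.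
  move: dL; rewrite eL mulnC dvdn_pmul2l ?prime_gt0 //.
  case/primeP: pr_h => _ /[apply] /orP[] /eqP ee.
    move: eL; rewrite ee mul1n => cL.
    have sLK : L \subset K.
      by rewrite (sub_normal_Hall hallK nsKG sLG) /pgroup cL; apply: pgroup_pi.
    by apply: sub_card_eq.
  by move: neLG; rewrite eL ee mulnC cKH eqxx.
have cLK : coprime #|L| #|K| by rewrite coprime_sym prime_coprime.
have dLh : #|L| %| #|H| by rewrite -(Gauss_dvdr _ cLK).
have cL : #|L| = #|H|.
  by case/primeP: pr_h => _ /(_ _ dLh) /orP[] /eqP // L1; rewrite L1 in L_gt1.
have iL : #|G : L| = #|K|.
  apply/eqP; rewrite -(eqn_pmul2l (ltnW L_gt1)) (Lagrange sLG) cL mulnC cKH //.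
have hK : ~~ (#|H| %| #|K|) by rewrite -prime_coprime // coprime_sym.
have sylL : #|H|.-Sylow(G) L by apply: sylow_prime; rewrite ?iL.
have iH : #|G : H| = #|K|.
  by apply/eqP; rewrite -(eqn_pmul2l (ltnW h_gt1)) (Lagrange sHG) -cKH mulnC.
have sylH : #|H|.-Sylow(G) H by apply: sylow_prime; rewrite ?iH.
have [x Gx eL] := Sylow_trans sylH sylL.
by move: nNL; rewrite eL normJ_in // NH eqxx.
Qed.
End NBwd.


Section NFwd.
Variable gT : finGroupType.
Implicit Types G H K L P Q : {group gT}.

Lemma prime_selfnorm_frob G Q : prime #|Q| -> Q \subset G -> 'N_G(Q) = Q -> Q :!=: G ->
  [Frobenius G with complement Q].
Proof.
move=> prQ sQG NQ neQG; apply/andP; split=> //.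
apply/normedTI_memJ_P; split=> //.
  by rewrite setD_eq0 subG1 -cardG_gt1 prime_gt1.
move=> a g /setD1P[a1 Qa] Gg; apply/idP/idP=> [/setD1P[ag1 Qag] | Qg]; last first.
  by rewrite !inE conjg_eq1 a1 groupJ.
have: Q :&: Q :^ g != 1.
  by apply/trivgPn; exists (a ^ g); rewrite // inE Qag memJ_conjg.
move/(prime_meetG prQ) => sQQg.
have eQ : Q :^ g = Q by apply/esym/eqP; rewrite eqEcard sQQg cardJg leqnn.
by rewrite -NQ inE Gg; apply/normP.
Qed.

Lemma frob_route G Q : calD G = 1%N -> prime #|Q| -> Q \subset G -> 'N_G(Q) = Q ->
  Q :!=: G ->
  [Frobenius G] /\ exists p q, [/\ prime p, prime q & #|G| = (p * q)%N].
Proof.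
move=> D1 prQ sQG NQ neQG.
have frobQ := prime_selfnorm_frob prQ sQG NQ neQG.
have [K frobK] := vcharacter.Frobenius_kernel_exists frobQ.
split; first exact: FrobeniusW frobK.
have [defG ntK ntQ ltKG _] := Frobenius_context frobK.
have [nsKG _ _ _ _] := sdprod_context defG.
have sKG := proper_sub ltKG.
have bK : bad G K.
  rewrite /bad sKG ntK /= (setIidPl (normal_norm nsKG)).
  by apply: contraTneq ltKG => ->; rewrite properxx.
have badK L : bad G L -> #|L| = #|K| by move=> bL; apply: calD1_card bK bL.
have k_gt1 : 1 < #|K| by rewrite cardG_gt1.
have pr_p := pdiv_prime k_gt1; set p := pdiv #|K| in pr_p.
have [P sylP] := Sylow_exists p K.
have sPK := pHall_sub sylP.
have eP : P :=: K.
  apply/eqP; apply: contraT => nePK.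
  have ntP : P :!=: 1.
    rewrite -cardG_gt1 (card_Hall sylP) p_part_gt1 mem_primes pr_p cardG_gt0.
    exact: pdiv_dvd.
  have bP : bad G P.
    rewrite /bad (subset_trans sPK sKG) ntP /=.
    apply/eqP=> NP; have := Frattini_arg nsKG sylP; rewrite NP mulGSid // => eKG.
    by move: ltKG; rewrite eKG properxx.
  by move: nePK; rewrite eqEcard sPK (badK _ bP) leqnn.
have pK : p.-group K by rewrite -eP (pHall_pgroup sylP).
have cK : #|K| = p.
  apply/eqP; apply: contraT => neK.
  have [y Ky oy] := Cauchy pr_p (pdiv_dvd _).
  have ltY : <[y]> \proper K.
    rewrite properEcard cycle_subG Ky -orderE oy ltn_neqAle eq_sym neK /=.
    exact: dvdn_leq (ltnW k_gt1) (pdiv_dvd _).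
  have ntY : <[y]> :!=: 1 by rewrite -cardG_gt1 -orderE oy prime_gt1.
  have := badK _ (bad_pgroup pK sKG ltY ntY).
  by rewrite -orderE oy => ep; move: neK; rewrite -ep eqxx.
exists p, #|Q|; split=> //.
by rewrite -(sdprod_card defG) cK.
Qed.
Lemma nonab_fwd G : ~~ abelian G -> calD G = 1%N ->
  [Frobenius G] /\ exists p q, [/\ prime p, prime q & #|G| = (p * q)%N].
Proof.
move=> nabG D1; have [H0 bH0] := calD1_ex D1; set n := #|H0|.
have badn L : bad G L -> #|L| = n by move=> bL; apply: calD1_card bH0 bL.
have [[Q [prQ sQG NQ neQG]] | noQ] := classic (exists Q : {group gT},
   [/\ prime #|Q|, Q \subset G, 'N_G(Q) = Q & Q :!=: G]).
  exact: frob_route D1 prQ sQG NQ neQG.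
exfalso.
have allr r : prime r -> r %| #|G| -> r = n.
  move=> pr_r dr; have [y Gy oy] := Cauchy pr_r dr.
  have ntY : <[y]> :!=: 1 by rewrite -cardG_gt1 -orderE oy prime_gt1.
  have sYG : <[y]> \subset G by rewrite cycle_subG.
  have neYG : <[y]> :!=: G.
    by apply: contraNneq nabG => <-; apply: cycle_abelian.
  have [NY | NY] := eqVneq 'N_G(<[y]>) <[y]>.
    by case: noQ; exists <[y]>%G; split; rewrite // -orderE oy.
  by rewrite -(badn <[y]>%G) ?/bad ?ntY ?sYG ?NY // -orderE oy.
have G_gt1 : 1 < #|G|.
  rewrite cardG_gt1; apply: contraNneq nabG => ->; exact: abelian1.
have pr_n : prime n by rewrite -(allr _ (pdiv_prime G_gt1) (pdiv_dvd _)) pdiv_prime.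
have pG : n.-group G.
  by apply/pgroupP=> r pr_r dr; rewrite inE /= (allr r pr_r dr).
have cG := card_pgroup pG; set k := logn n #|G| in cG.
have n_gt1 := prime_gt1 pr_n.
have k_gt2 : 2 < k.
  case: k cG => [|[|[|//]]] cG.
  - by move: G_gt1; rewrite cG.
  - by case/negP: nabG; apply: cyclic_abelian; apply: prime_cyclic; rewrite cG.
  - by case/negP: nabG; apply: (card_p2group_abelian pr_n).
have [A [sAG _ cA]] := normal_pgroup pG (normal_refl G) (ltnW k_gt2 : 2 <= k).
have ltAG : A \proper G.
  by rewrite properEcard sAG cA cG ltn_exp2l.
have ntA : A :!=: 1.
  by rewrite -cardG_gt1 cA (ltn_exp2l 0 2 n_gt1).
have := badn _ (bad_pgroup pG (subxx _) ltAG ntA).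
rewrite cA => /eqP; rewrite -{2}[n]expn1 eqn_exp2l //.
Qed.
End NFwd.

Unset Implicit Arguments.

Theorem mainTheorem4 (gT : finGroupType) (G : {group gT}) :
  (abelian G ->
     (calD G = 1%N <-> cyclic G /\ exists p, prime p /\ #|G| = (p ^ 2)%N)) /\
  (~~ abelian G ->
     (calD G = 1%N <-> [Frobenius G] /\
        exists p q, [/\ prime p, prime q & #|G| = (p * q)%N])).
Proof.
split=> abG; split.
- exact: abelian_fwd.
- by case=> cycG ex; apply: abelian_bwd.
- exact: nonab_fwd.
- by case=> frobG ex; apply: nonab_bwd.
Qed.
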